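(* Let $\eta\in\mathcal O_N$ and let $p^B_i(\eta)$, $p^D_i(\eta)$ denote the probabilities that an explorer attaches to column $i$ in configuration $\eta$ under ballistic, respectively diffusive, deposition. Then for every $k=1,\dots,N$, $$\sum_{i=1}^k p^B_i(\eta)\ge\sum_{i=1}^k\frac{\eta_i+1}{|\eta|+N}\quad\text{and}\quad\sum_{i=1}^k p^D_i(\eta)\ge\sum_{i=1}^k\frac{\eta_i+1}{|\eta|+N}.$$
   Context: Deposition models: for $N\ge2$, $G_N=\{1,\dots,N\}$, a configuration $\eta\in\mathbb N^N$ gives column heights, $|\eta|=\sum_i\eta_i$. Given $\eta$, an explorer is a walk $(X_n,Z_n)_{n\ge0}$ with $(X_n)$ i.i.d. uniform on $G_N$, $Z_0=\max_i\eta_i+1$, and increments $Z_{n+1}-Z_n$ i.i.d. uniform on $\{-1,1\}$ independent of $(X_n)$ (diffusive deposition) or identically $-1$ (ballistic deposition); with $n^*=\inf\{n:Z_n\le\eta_{X_n}\}$, the explorer attaches to column $X_{n^*}$. $\mathcal O_N$ is the set of $\eta\in\mathbb N^N$ with $\eta_1\ge\dots\ge\eta_N$. *)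

(* Defs.v *)
From Stdlib Require Import Reals Lra Lia ZArith Arith List.
Import ListNotations.
Open Scope R_scope.

(* Columns are indexed 1..N; a configuration is eta : nat -> nat,
   only its values on 1..N matter. *)

Definition total (N : nat) (eta : nat -> nat) : nat :=
  fold_right Nat.add 0%nat (map eta (seq 1 N)).

Definition maxh (N : nat) (eta : nat -> nat) : nat :=
  fold_right Nat.max 0%nat (map eta (seq 1 N)).

Fixpoint words {A : Type} (letters : list A) (len : nat) : list (list A) :=
  match len with
  | O => [[]]
  | S l => flat_map (fun a => map (cons a) (words letters l)) letters
  end.

Fixpoint walk (z0 : Z) (ds : list Z) : list Z :=
  match ds with
  | [] => [z0]
  | d :: ds' => z0 :: walk (z0 + d)%Z ds'
  end.

(* column to which the explorer attaches, if the first time n with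
   Z_n <= eta (X_n) occurs within the given (finite) trajectory *)
Fixpoint attach (eta : nat -> nat) (xs : list nat) (zs : list Z) : option nat :=
  match xs, zs with
  | x :: xs', z :: zs' =>
      if Z.leb z (Z.of_nat (eta x)) then Some x else attach eta xs' zs'
  | _, _ => None
  end.

(* Increment laws: uniform on the given list. *)
Definition diffusive_steps : list Z := [1%Z; (-1)%Z].
Definition ballistic_steps : list Z := [(-1)%Z].

(* P(n* <= n and X_{n*} = i): exact probability of an event determined by
   X_0..X_n (i.i.d. uniform on {1..N}) and the first n increments
   (i.i.d. uniform on the list steps). *)
Definition attach_prob_upto (steps : list Z) (N : nat) (eta : nat -> nat)
    (i n : nat) : R :=
  let z0 := Z.of_nat (S (maxh N eta)) in
  let good := filter
      (fun p : list nat * list Z =>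
         match attach eta (fst p) (walk z0 (snd p)) with
         | Some j => Nat.eqb j i
         | None => false
         end)
      (list_prod (words (seq 1 N) (S n)) (words steps n)) in
  INR (length good) / (INR N ^ (S n) * INR (length steps) ^ n).

Definition rsum_1_to (k : nat) (f : nat -> R) : R :=
  fold_right Rplus 0 (map f (seq 1 k)).

(* Main.v *)
Require Import Defs.
From Stdlib Require Import Reals Lra Lia ZArith Arith List.
Import ListNotations.
Open Scope bool_scope.
Open Scope R_scope.


Definition rsum {A} (l : list A) (f : A -> R) : R := fold_right Rplus 0 (map f l).

Lemma rsum_nil {A} (f : A -> R) : rsum [] f = 0. Proof. reflexivity. Qed.
Lemma rsum_cons {A} a l (f : A -> R) : rsum (a::l) f = f a + rsum l f. Proof. reflexivity. Qed.
Lemma rsum_app {A} l1 l2 (f : A -> R) : rsum (l1++l2) f = rsum l1 f + rsum l2 f.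
Proof. induction l1; simpl; unfold rsum in *; simpl; [lra|]. rewrite IHl1; lra. Qed.
Lemma rsum_ext_in {A} l (f g : A -> R) : (forall a, In a l -> f a = g a) -> rsum l f = rsum l g.
Proof. induction l; intros H; [reflexivity|]. rewrite !rsum_cons. f_equal. apply H; left; auto. apply IHl; intros; apply H; right; auto. Qed.
Lemma rsum_ext {A} l (f g : A -> R) : (forall a, f a = g a) -> rsum l f = rsum l g.
Proof. intros; apply rsum_ext_in; auto. Qed.
Lemma rsum_plus {A} l (f g : A -> R) : rsum l (fun a => f a + g a) = rsum l f + rsum l g.
Proof. induction l; [unfold rsum; simpl; lra|]. rewrite !rsum_cons, IHl; lra. Qed.
Lemma rsum_scal {A} l c (f : A -> R) : rsum l (fun a => c * f a) = c * rsum l f.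
Proof. induction l; [unfold rsum; simpl; lra|]. rewrite !rsum_cons, IHl; lra. Qed.
Lemma rsum_const {A} l c : rsum l (fun _ : A => c) = INR (length l) * c.
Proof. induction l; [unfold rsum; simpl; lra|]. rewrite rsum_cons, IHl, length_cons, S_INR; lra. Qed.
Lemma rsum_le_in {A} l (f g : A -> R) : (forall a, In a l -> f a <= g a) -> rsum l f <= rsum l g.
Proof. induction l; intros H; [unfold rsum; simpl; lra|]. rewrite !rsum_cons.
  assert (f a <= g a) by (apply H; left; auto). assert (rsum l f <= rsum l g) by (apply IHl; intros; apply H; right; auto). lra. Qed.
Lemma rsum_le {A} l (f g : A -> R) : (forall a, f a <= g a) -> rsum l f <= rsum l g.
Proof. intros; apply rsum_le_in; auto. Qed.
Lemma rsum_swap {A B} (l1 : list A) (l2 : list B) F :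
  rsum l1 (fun a => rsum l2 (fun b => F a b)) = rsum l2 (fun b => rsum l1 (fun a => F a b)).
Proof. induction l1; simpl.
  - rewrite (rsum_ext l2 _ (fun _ => 0)) by reflexivity. rewrite rsum_const, rsum_nil; lra.
  - rewrite rsum_cons, IHl1, <- rsum_plus. apply rsum_ext; intros; rewrite rsum_cons; lra. Qed.
Lemma rsum_filter {A} (p : A -> bool) l : INR (length (filter p l)) = rsum l (fun a => if p a then 1 else 0).
Proof. induction l; [reflexivity|]. simpl. rewrite rsum_cons. destruct (p a). simpl length. rewrite S_INR, IHl. lra. rewrite IHl. lra. Qed.
Lemma rsum_prod {A B} (l1 : list A) (l2 : list B) F :
  rsum (list_prod l1 l2) F = rsum l1 (fun a => rsum l2 (fun b => F (a,b))).
Proof. induction l1; [reflexivity|]. simpl. rewrite rsum_app, rsum_cons, IHl1. f_equal.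
  clear. induction l2; [reflexivity|]. simpl. rewrite !rsum_cons, IHl2. reflexivity. Qed.
Lemma rsum_flat {A} (L : list A) (W : list (list A)) F :
  rsum (flat_map (fun a => map (cons a) W) L) F = rsum L (fun a => rsum W (fun w => F (a::w))).
Proof. induction L; [reflexivity|]. simpl. rewrite rsum_app, rsum_cons, IHL. f_equal.
  clear. induction W; [reflexivity|]. simpl. rewrite !rsum_cons, IHW. reflexivity. Qed.
Lemma rsum_nonneg {A} l (f : A -> R) : (forall a, 0 <= f a) -> 0 <= rsum l f.
Proof. intros H. replace 0 with (rsum l (fun _ => 0)). apply rsum_le; auto. rewrite rsum_const; lra. Qed.

Lemma words_length {A} (L : list A) n : length (words L n) = (length L ^ n)%nat.
Proof. induction n; [reflexivity|]. simpl. rewrite length_flat_map.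
  rewrite (map_ext _ (fun _ => length L ^ n)%nat). 2:{ intros; rewrite length_map; auto. }
  clear IHn. generalize (length L ^ n)%nat. intros c. induction L as [|a L IH]; simpl; auto. Qed.


Lemma rsum_scal_r {A} l c (f : A -> R) : rsum l f * c = rsum l (fun a => f a * c).
Proof. rewrite Rmult_comm, <- rsum_scal. apply rsum_ext; intros; lra. Qed.

Definition indb (b : bool) : R := if b then 1 else 0.

Fixpoint Rp (D : list Z) (N : nat) (eta : nat -> nat) (z : Z) (n i : nat) : R :=
  match n with
  | O => / INR N * rsum (seq 1 N) (fun x =>
           if Z.leb z (Z.of_nat (eta x)) then indb (Nat.eqb x i) else 0)
  | S n' => / INR N * rsum (seq 1 N) (fun x =>
           if Z.leb z (Z.of_nat (eta x)) then indb (Nat.eqb x i)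
           else / INR (length D) * rsum D (fun d => Rp D N eta (z + d)%Z n' i))
  end.

Definition goodp (eta : nat -> nat) (z : Z) (i : nat) (p : list nat * list Z) : bool :=
  match attach eta (fst p) (walk z (snd p)) with
  | Some j => Nat.eqb j i
  | None => false
  end.

Definition num D N eta z n i : R :=
  rsum (words (seq 1 N) (S n)) (fun xs => rsum (words D n) (fun ds => indb (goodp eta z i (xs, ds)))).

Lemma goodp_cons eta z i x xs d ds :
  goodp eta z i (x::xs, d::ds) =
  if Z.leb z (Z.of_nat (eta x)) then Nat.eqb x i else goodp eta (z+d)%Z i (xs, ds).
Proof. unfold goodp; simpl. destruct (z <=? Z.of_nat (eta x))%Z; reflexivity. Qed.

Lemma num_Rp D N eta z n i : (1 <= N)%nat -> D <> [] ->
  num D N eta z n i / (INR N ^ S n * INR (length D) ^ n) = Rp D N eta z n i.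
Proof.
  intros HN HD.
  assert (HN' : INR N <> 0) by (apply not_0_INR; lia).
  assert (HD' : INR (length D) <> 0) by (apply not_0_INR; destruct D; simpl; congruence).
  revert z; induction n; intros z.
  - unfold num. change (words (seq 1 N) 1) with
      (flat_map (fun a => map (cons a) [@nil nat]) (seq 1 N)). rewrite rsum_flat. simpl Rp. unfold Rdiv.
    rewrite rsum_scal_r, <- rsum_scal. 
    apply rsum_ext; intros x. unfold rsum; simpl. unfold goodp; simpl.
    destruct (z <=? Z.of_nat (eta x))%Z; simpl; unfold indb; try destruct (x =? i)%nat; simpl; field; auto.
  - unfold num. change (words (seq 1 N) (S (S n))) with
      (flat_map (fun a => map (cons a) (words (seq 1 N) (S n))) (seq 1 N)).
    change (words D (S n)) with (flat_map (fun a => map (cons a) (words D n)) D).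
    rewrite rsum_flat. simpl Rp. unfold Rdiv. rewrite rsum_scal_r, <- rsum_scal.
    apply rsum_ext; intros x.
    rewrite (rsum_ext _ _ (fun xs => rsum D (fun d => rsum (words D n) (fun ds =>
        indb (goodp eta z i (x::xs, d::ds)))))).
    2:{ intros xs. apply rsum_flat. }
    destruct (z <=? Z.of_nat (eta x))%Z eqn:E.
    + rewrite (rsum_ext _ _ (fun _ => rsum D (fun _ => rsum (words D n) (fun _ => indb (x =? i)%nat)))).
      2:{ intros xs. apply rsum_ext; intros d. apply rsum_ext; intros ds. rewrite goodp_cons, E; auto. }
      rewrite !rsum_const, !words_length, !pow_INR. rewrite length_seq. simpl. field. repeat split; try apply pow_nonzero; auto.
    + rewrite (rsum_ext _ _ (fun xs => rsum D (fun d => rsum (words D n) (fun ds => indb (goodp eta (z+d) i (xs, ds)))))).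
      2:{ intros xs. apply rsum_ext; intros d. apply rsum_ext; intros ds. rewrite goodp_cons, E; auto. }
      rewrite rsum_swap. rewrite rsum_scal_r.
      rewrite <- (rsum_scal D (/ INR (length D))), <- (rsum_scal D (/ INR N)). apply rsum_ext; intros d.
      rewrite <- IHn. unfold num, Rdiv. simpl. field. repeat split; try apply pow_nonzero; auto.
Qed.

Lemma attach_Rp D N eta i n : (1 <= N)%nat -> D <> [] ->
  attach_prob_upto D N eta i n = Rp D N eta (Z.of_nat (S (maxh N eta))) n i.
Proof.
  intros HN HD. rewrite <- num_Rp by auto. unfold attach_prob_upto, num.
  rewrite rsum_filter, rsum_prod. reflexivity.
Qed.


Fixpoint Up (D : list Z) (N : nat) (eta : nat -> nat) (z : Z) (n : nat) : R :=
  match n with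
  | O => / INR N * rsum (seq 1 N) (fun x => if Z.leb z (Z.of_nat (eta x)) then 0 else 1)
  | S n' => / INR N * rsum (seq 1 N) (fun x =>
           if Z.leb z (Z.of_nat (eta x)) then 0
           else / INR (length D) * rsum D (fun d => Up D N eta (z + d)%Z n'))
  end.

Lemma Up_S D N eta z n : Up D N eta z (S n) = / INR N * rsum (seq 1 N) (fun x =>
           if Z.leb z (Z.of_nat (eta x)) then 0
           else / INR (length D) * rsum D (fun d => Up D N eta (z + d)%Z n)).
Proof. reflexivity. Qed.

Lemma ind_01 b : 0 <= indb b <= 1. Proof. destruct b; simpl; lra. Qed.

Lemma avg_bounds (D : list Z) (f : Z -> R) lo hi : D <> [] -> lo <= hi ->
  (forall d, lo <= f d <= hi) -> lo <= / INR (length D) * rsum D f <= hi.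
Proof.
  intros HD Hlh H. assert (Hs : 0 < INR (length D)) by (apply lt_0_INR; destruct D; simpl; [congruence|lia]).
  assert (A1 : rsum D (fun _ => lo) <= rsum D f) by (apply rsum_le; intros; apply H).
  assert (A2 : rsum D f <= rsum D (fun _ => hi)) by (apply rsum_le; intros; apply H).
  rewrite rsum_const in A1, A2.
  split.
  - apply (Rmult_le_reg_l (INR (length D))); auto. rewrite <- Rmult_assoc, Rinv_r, Rmult_1_l by lra. lra.
  - apply (Rmult_le_reg_l (INR (length D))); auto. rewrite <- Rmult_assoc, Rinv_r, Rmult_1_l by lra. lra.
Qed.

Lemma avgN_bounds N (f : nat -> R) lo hi : (1 <= N)%nat -> lo <= hi ->
  (forall x, lo <= f x <= hi) -> lo <= / INR N * rsum (seq 1 N) f <= hi.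
Proof.
  intros HN Hlh H. assert (Hs : 0 < INR N) by (apply lt_0_INR; lia).
  assert (A1 : rsum (seq 1 N) (fun _ => lo) <= rsum (seq 1 N) f) by (apply rsum_le; intros; apply H).
  assert (A2 : rsum (seq 1 N) f <= rsum (seq 1 N) (fun _ => hi)) by (apply rsum_le; intros; apply H).
  rewrite rsum_const, length_seq in A1, A2.
  split.
  - apply (Rmult_le_reg_l (INR N)); auto. rewrite <- Rmult_assoc, Rinv_r, Rmult_1_l by lra. lra.
  - apply (Rmult_le_reg_l (INR N)); auto. rewrite <- Rmult_assoc, Rinv_r, Rmult_1_l by lra. lra.
Qed.

Lemma Rp_01 D N eta z n i : (1 <= N)%nat -> D <> [] -> 0 <= Rp D N eta z n i <= 1.
Proof.
  intros HN HD. revert z; induction n; intros z; simpl Rp; apply avgN_bounds; auto; try lra; intros x.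
  - destruct (z <=? _)%Z; [apply ind_01|lra].
  - destruct (z <=? _)%Z; [apply ind_01|]. apply avg_bounds; auto; lra.
Qed.

Lemma Up_01 D N eta z n : (1 <= N)%nat -> D <> [] -> 0 <= Up D N eta z n <= 1.
Proof.
  intros HN HD. revert z; induction n; intros z; simpl Up; apply avgN_bounds; auto; try lra; intros x.
  - destruct (z <=? _)%Z; lra.
  - destruct (z <=? _)%Z; [lra|]. apply avg_bounds; auto; lra.
Qed.

Lemma avg_le (D : list Z) f g : D <> [] -> (forall d, f d <= g d) ->
  / INR (length D) * rsum D f <= / INR (length D) * rsum D g.
Proof. intros HD H. assert (Hs : 0 < INR (length D)) by (apply lt_0_INR; destruct D; simpl; [congruence|lia]).
  apply Rmult_le_compat_l. left; apply Rinv_0_lt_compat; auto. apply rsum_le; auto. Qed.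

Lemma avgN_le N (f g : nat -> R) : (forall x, f x <= g x) ->
  / INR N * rsum (seq 1 N) f <= / INR N * rsum (seq 1 N) g.
Proof. intros H. destruct N. simpl. unfold rsum; simpl; lra.
  apply Rmult_le_compat_l. left; apply Rinv_0_lt_compat; apply lt_0_INR; lia. apply rsum_le; auto. Qed.

Lemma Rp_mono D N eta z n i : (1 <= N)%nat -> D <> [] -> Rp D N eta z n i <= Rp D N eta z (S n) i.
Proof.
  intros HN HD. revert z; induction n; intros z.
  - simpl Rp. apply avgN_le; intros x. destruct (z <=? _)%Z; [lra|].
    refine (proj1 (avg_bounds D _ 0 1 HD ltac:(lra) _)). intros d; exact (Rp_01 D N eta (z+d) 0 i HN HD).
  - change (Rp D N eta z (S n) i <= Rp D N eta z (S (S n)) i).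
    simpl Rp. apply avgN_le; intros x. destruct (z <=? _)%Z; [lra|].
    apply avg_le; auto.
Qed.

Lemma Up_mono D N eta z n : (1 <= N)%nat -> D <> [] -> Up D N eta z (S n) <= Up D N eta z n.
Proof.
  intros HN HD. revert z; induction n; intros z.
  - simpl Up. apply avgN_le; intros x. destruct (z <=? _)%Z; [lra|].
    refine (proj2 (avg_bounds D _ 0 1 HD ltac:(lra) _)). intros d; exact (Up_01 D N eta (z+d) 0 HN HD).
  - rewrite (Up_S D N eta z (S n)), (Up_S D N eta z n). apply avgN_le; intros x. destruct (z <=? _)%Z; [lra|].
    apply avg_le; auto.
Qed.

Lemma sum_ind_seq x a k : rsum (seq a k) (fun i => indb (Nat.eqb x i)) = indb ((a <=? x)%nat && (x <? a + k)%nat).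
Proof.
  revert a; induction k; intros a.
  - unfold rsum; simpl. destruct (a <=? x)%nat eqn:E1; destruct (x <? a+0)%nat eqn:E2; simpl; auto.
    apply Nat.leb_le in E1; apply Nat.ltb_lt in E2; lia.
  - simpl seq. rewrite rsum_cons, IHk.
    destruct (x =? a)%nat eqn:E0; destruct (a <=? x)%nat eqn:E1; destruct (x <? a + S k)%nat eqn:E2;
    destruct (S a <=? x)%nat eqn:E3; destruct (x <? S a + k)%nat eqn:E4; simpl; try lra;
    repeat match goal with
    | H : (_ =? _)%nat = true |- _ => apply Nat.eqb_eq in H
    | H : (_ =? _)%nat = false |- _ => apply Nat.eqb_neq in H
    | H : (_ <=? _)%nat = true |- _ => apply Nat.leb_le in H
    | H : (_ <=? _)%nat = false |- _ => apply Nat.leb_gt in H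
    | H : (_ <? _)%nat = true |- _ => apply Nat.ltb_lt in H
    | H : (_ <? _)%nat = false |- _ => apply Nat.ltb_ge in H
    end; lia.
Qed.

Definition condh D N eta k (h : Z -> R) :=
  forall z, h z <= / INR N * rsum (seq 1 N) (fun x =>
     if Z.leb z (Z.of_nat (eta x)) then indb (Nat.leb x k)
     else / INR (length D) * rsum D (fun d => h (z + d)%Z)).

Lemma avgN_le_in N (f g : nat -> R) : (forall x, (1 <= x)%nat -> f x <= g x) ->
  / INR N * rsum (seq 1 N) f <= / INR N * rsum (seq 1 N) g.
Proof. intros H. destruct N. simpl. unfold rsum; simpl; lra.
  apply Rmult_le_compat_l. left; apply Rinv_0_lt_compat; apply lt_0_INR; lia.
  apply rsum_le_in; intros x Hx; apply in_seq in Hx; apply H; lia. Qed.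

Lemma avg_const (D : list Z) c : D <> [] -> / INR (length D) * rsum D (fun _ => c) = c.
Proof. intros HD. rewrite rsum_const. assert (0 < INR (length D)) by (apply lt_0_INR; destruct D; simpl; [congruence|lia]).
  field. lra. Qed.

Lemma key D N eta k h : (1 <= N)%nat -> D <> [] -> condh D N eta k h -> (forall z, h z <= 1) ->
  forall n z, h z <= rsum (seq 1 k) (fun i => Rp D N eta z n i) + Up D N eta z n.
Proof.
  intros HN HD Hc H1 n. induction n; intros z; eapply Rle_trans; try apply Hc.
  - simpl Rp; simpl Up. rewrite rsum_scal. rewrite rsum_swap, <- Rmult_plus_distr_l, <- rsum_plus.
    apply avgN_le_in; intros x Hx. destruct (z <=? _)%Z.
    + rewrite sum_ind_seq. replace (1 <=? x)%nat with true by (symmetry; apply Nat.leb_le; lia).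
      replace (x <? 1 + k)%nat with (x <=? k)%nat by (destruct (x <=? k)%nat eqn:E; symmetry; [apply Nat.ltb_lt; apply Nat.leb_le in E | apply Nat.ltb_ge; apply Nat.leb_gt in E]; lia).
      simpl andb. lra.
    + rewrite (rsum_const (seq 1 k) 0).
      eapply Rle_trans. apply avg_le; auto. intros d; apply (H1 (z+d)%Z). rewrite avg_const; auto; lra.
  - simpl Rp; simpl Up. rewrite rsum_scal. rewrite rsum_swap, <- Rmult_plus_distr_l, <- rsum_plus.
    apply avgN_le_in; intros x Hx. destruct (z <=? _)%Z.
    + rewrite sum_ind_seq. replace (1 <=? x)%nat with true by (symmetry; apply Nat.leb_le; lia).
      replace (x <? 1 + k)%nat with (x <=? k)%nat by (destruct (x <=? k)%nat eqn:E; symmetry; [apply Nat.ltb_lt; apply Nat.leb_le in E | apply Nat.ltb_ge; apply Nat.leb_gt in E]; lia).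
      simpl andb. lra.
    + rewrite rsum_scal, rsum_swap, <- Rmult_plus_distr_l, <- rsum_plus.
      apply avg_le; auto.
Qed.


Lemma filter_all {A} (p : A -> bool) l : (forall x, In x l -> p x = true) -> filter p l = l.
Proof. induction l; simpl; intros H; auto. rewrite H by auto. rewrite IHl; auto. Qed.
Lemma filter_none {A} (p : A -> bool) l : (forall x, In x l -> p x = false) -> filter p l = [].
Proof. induction l; simpl; intros H; auto. rewrite H by auto. rewrite IHl; auto. Qed.

Lemma cnt_min (p : nat -> bool) N k : (k <= N)%nat ->
  (forall x y, (1 <= y)%nat -> (y <= x)%nat -> (x <= N)%nat -> p x = true -> p y = true) ->
  length (filter (fun x => p x && (x <=? k)%nat) (seq 1 N)) = Nat.min k (length (filter p (seq 1 N))).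
Proof.
  intros Hk Hp. replace N with (k + (N - k))%nat by lia. rewrite !seq_app, !filter_app, !length_app.
  rewrite (filter_none (fun x => p x && (x <=? k)%nat) (seq (1 + k) (N - k))).
  2:{ intros x Hx. apply in_seq in Hx. destruct (p x); simpl; auto. apply Nat.leb_gt. lia. }
  rewrite (filter_ext_in _ p (seq 1 k)).
  2:{ intros x Hx. apply in_seq in Hx. destruct (p x); simpl; auto. apply Nat.leb_le. lia. }
  simpl length. rewrite Nat.add_0_r.
  destruct (existsb p (seq (S k) (N - k))) eqn:E.
  - apply existsb_exists in E. destruct E as [y [Hy Hpy]]. apply in_seq in Hy.
    rewrite (filter_all p (seq 1 k)). 2:{ intros x Hx. apply in_seq in Hx. apply (Hp y x); auto; lia. }
    rewrite length_seq. lia.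
  - rewrite (filter_none p (seq (S k) (N-k))).
    2:{ intros x Hx. destruct (p x) eqn:Ex; auto. assert (existsb p (seq (S k) (N-k)) = true) by (apply existsb_exists; eauto). congruence. }
    simpl. pose proof (filter_length_le p (seq 1 k)). rewrite length_seq in H. lia.
Qed.

Definition mL N (eta : nat -> nat) (z : Z) : R :=
  rsum (seq 1 N) (fun x => if Z.leb z (Z.of_nat (eta x)) then 1 else 0).
Definition gL N (eta : nat -> nat) k (z : Z) : R :=
  rsum (seq 1 N) (fun x => if Z.leb z (Z.of_nat (eta x)) then indb (Nat.leb x k) else 0).
Definition cL N (eta : nat -> nat) (z : Z) : R :=
  rsum (seq 1 N) (fun x => if Z.leb z (Z.of_nat (eta x)) then 0 else 1).

Lemma split_sum N eta k z V :
  rsum (seq 1 N) (fun x => if Z.leb z (Z.of_nat (eta x)) then indb (Nat.leb x k) else V)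
  = gL N eta k z + cL N eta z * V.
Proof. unfold gL, cL. rewrite Rmult_comm, <- rsum_scal, <- rsum_plus. apply rsum_ext; intros x.
  destruct (z <=? _)%Z; lra. Qed.

Lemma split_sum0 N eta z V :
  rsum (seq 1 N) (fun x => if Z.leb z (Z.of_nat (eta x)) then 0 else V) = cL N eta z * V.
Proof. unfold cL. rewrite Rmult_comm, <- rsum_scal. apply rsum_ext; intros x.
  destruct (z <=? _)%Z; lra. Qed.

Lemma mc N eta z : mL N eta z + cL N eta z = INR N.
Proof. unfold mL, cL. rewrite <- rsum_plus. rewrite (rsum_ext _ _ (fun _ => 1)).
  rewrite rsum_const, length_seq; lra. intros; destruct (z <=? _)%Z; lra. Qed.

Lemma mL_nat N eta z : mL N eta z = INR (length (filter (fun x => Z.leb z (Z.of_nat (eta x))) (seq 1 N))).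
Proof. rewrite rsum_filter. reflexivity. Qed.
Lemma gL_nat N eta k z : gL N eta k z =
  INR (length (filter (fun x => Z.leb z (Z.of_nat (eta x)) && (x <=? k)%nat) (seq 1 N))).
Proof. rewrite rsum_filter. unfold gL. apply rsum_ext; intros x. destruct (z <=? _)%Z; reflexivity. Qed.

Lemma cL_nonneg N eta z : 0 <= cL N eta z.
Proof. apply rsum_nonneg; intros; destruct (z <=? _)%Z; lra. Qed.



Lemma cross N eta k z1 z2 : (k <= N)%nat ->
  (forall i j, (1 <= i)%nat -> (i <= j)%nat -> (j <= N)%nat -> (eta j <= eta i)%nat) ->
  (z1 <= z2)%Z ->
  gL N eta k z1 * mL N eta z2 <= gL N eta k z2 * mL N eta z1 /\ mL N eta z2 <= mL N eta z1
  /\ gL N eta k z1 <= mL N eta z1.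
Proof.
  intros Hk Ho Hz. rewrite !gL_nat, !mL_nat.
  assert (Hd : forall z, forall x y, (1 <= y)%nat -> (y <= x)%nat -> (x <= N)%nat ->
     (z <=? Z.of_nat (eta x))%Z = true -> (z <=? Z.of_nat (eta y))%Z = true).
  { intros z x y H1 H2 H3 H. apply Z.leb_le in H. apply Z.leb_le. specialize (Ho y x H1 H2 H3). lia. }
  rewrite !(cnt_min _ N k Hk (Hd _)).
  set (m1 := length (filter (fun x : nat => (z1 <=? Z.of_nat (eta x))%Z) (seq 1 N))).
  set (m2 := length (filter (fun x : nat => (z2 <=? Z.of_nat (eta x))%Z) (seq 1 N))).
  assert (m2 <= m1)%nat.
  { unfold m1, m2. clear -Hz. induction (seq 1 N); simpl; auto.
    destruct (z2 <=? Z.of_nat (eta a))%Z eqn:F2; destruct (z1 <=? Z.of_nat (eta a))%Z eqn:F1; simpl; try lia.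
    }
  rewrite <- !mult_INR. repeat split; apply le_INR; try lia.
  clearbody m1 m2.
  destruct (Nat.le_ge_cases k m2).
  - rewrite !Nat.min_l by lia. nia.
  - rewrite (Nat.min_r k m2) by lia. destruct (Nat.le_ge_cases k m1).
    + rewrite Nat.min_l by lia. nia.
    + rewrite Nat.min_r by lia. nia.
Qed.


Lemma le_fold_max (eta : nat -> nat) l x : In x l -> (eta x <= fold_right Nat.max 0 (map eta l))%nat.
Proof. induction l; simpl; intros H; [contradiction|]. destruct H; subst; [lia|]. specialize (IHl H); lia. Qed.
Lemma fold_max_le (eta : nat -> nat) l b : (forall x, In x l -> (eta x <= b)%nat) -> (fold_right Nat.max 0 (map eta l) <= b)%nat.
Proof. induction l; simpl; intros H; [lia|]. assert (eta a <= b)%nat by auto. assert (fold_right Nat.max 0 (map eta l) <= b)%nat by auto. lia. Qed.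

Lemma eta_le_M N eta x : In x (seq 1 N) -> (eta x <= maxh N eta)%nat.
Proof. apply le_fold_max. Qed.

Lemma M_le_eta1 N eta : (1 <= N)%nat ->
  (forall i j, (1 <= i)%nat -> (i <= j)%nat -> (j <= N)%nat -> (eta j <= eta i)%nat) ->
  maxh N eta = eta 1%nat.
Proof. intros HN Ho. apply Nat.le_antisymm.
  - apply fold_max_le. intros x Hx; apply in_seq in Hx. apply Ho; lia.
  - apply eta_le_M. apply in_seq; lia. Qed.

Lemma F1 N eta k z : (z <= 0)%Z -> gL N eta k z = gL N eta k 0 /\ cL N eta z = 0 /\ mL N eta z = INR N.
Proof. intros Hz. unfold gL, cL, mL. repeat split.
  - apply rsum_ext; intros x. replace (z <=? _)%Z with true by (symmetry; apply Z.leb_le; lia).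
    replace (0 <=? _)%Z with true by (symmetry; apply Z.leb_le; lia). auto.
  - rewrite (rsum_ext _ _ (fun _ => 0)). rewrite rsum_const; lra.
    intros x. replace (z <=? _)%Z with true by (symmetry; apply Z.leb_le; lia). auto.
  - rewrite (rsum_ext _ _ (fun _ => 1)). rewrite rsum_const, length_seq; lra.
    intros x. replace (z <=? _)%Z with true by (symmetry; apply Z.leb_le; lia). auto.
Qed.

Lemma F2 N eta k z : (Z.of_nat (maxh N eta) < z)%Z -> gL N eta k z = 0 /\ cL N eta z = INR N /\ mL N eta z = 0.
Proof. intros Hz. unfold gL, cL, mL. repeat split.
  - rewrite (rsum_ext_in _ _ (fun _ => 0)). rewrite rsum_const; lra.
    intros x Hx. pose proof (eta_le_M N eta x Hx). replace (z <=? _)%Z with false by (symmetry; apply Z.leb_gt; lia). auto.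
  - rewrite (rsum_ext_in _ _ (fun _ => 1)). rewrite rsum_const, length_seq; lra.
    intros x Hx. pose proof (eta_le_M N eta x Hx). replace (z <=? _)%Z with false by (symmetry; apply Z.leb_gt; lia). auto.
  - rewrite (rsum_ext_in _ _ (fun _ => 0)). rewrite rsum_const; lra.
    intros x Hx. pose proof (eta_le_M N eta x Hx). replace (z <=? _)%Z with false by (symmetry; apply Z.leb_gt; lia). auto.
Qed.

Lemma F5 N eta z : (1 <= N)%nat ->
  (forall i j, (1 <= i)%nat -> (i <= j)%nat -> (j <= N)%nat -> (eta j <= eta i)%nat) ->
  (z <= Z.of_nat (maxh N eta))%Z -> 1 <= mL N eta z.
Proof. intros HN Ho Hz. rewrite M_le_eta1 in Hz by auto. unfold mL.
  replace N with (S (N-1)) by lia. simpl seq. rewrite rsum_cons.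
  replace (z <=? _)%Z with true by (symmetry; apply Z.leb_le; lia).
  assert (0 <= rsum (seq 2 (N-1)) (fun x => if (z <=? Z.of_nat (eta x))%Z then 1 else 0)).
  apply rsum_nonneg; intros; destruct (_ <=? _)%Z; lra. lra. Qed.

Lemma gm_bounds N eta k z : 0 <= gL N eta k z /\ 0 <= mL N eta z.
Proof. split; apply rsum_nonneg; intros; destruct (_ <=? _)%Z; try apply ind_01; lra. Qed.

Fixpoint Bn N eta k (l : nat) : R :=
  match l with
  | O => / INR N * gL N eta k 0
  | S l' => / INR N * (gL N eta k (Z.of_nat (S l')) + cL N eta (Z.of_nat (S l')) * Bn N eta k l')
  end.

Lemma Bn_S N eta k l : Bn N eta k (S l) =
  / INR N * (gL N eta k (Z.of_nat (S l)) + cL N eta (Z.of_nat (S l)) * Bn N eta k l).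
Proof. reflexivity. Qed.

Lemma Binv N eta k : (1 <= N)%nat -> (k <= N)%nat ->
  (forall i j, (1 <= i)%nat -> (i <= j)%nat -> (j <= N)%nat -> (eta j <= eta i)%nat) ->
  forall l w, (l <= w)%nat -> Bn N eta k l * mL N eta (Z.of_nat w) <= gL N eta k (Z.of_nat w).
Proof.
  intros HN Hk Ho. assert (HN' : 0 < INR N) by (apply lt_0_INR; lia).
  induction l; intros w Hw.
  - simpl. destruct (cross N eta k 0 (Z.of_nat w) Hk Ho ltac:(lia)) as [C _].
    destruct (F1 N eta k 0 ltac:(lia)) as [_ [_ Hm0]]. rewrite Hm0 in C.
    apply (Rmult_le_reg_l (INR N)); auto. replace (INR N * (/ INR N * gL N eta k 0 * mL N eta (Z.of_nat w)))
      with (gL N eta k 0 * mL N eta (Z.of_nat w)) by (field; lra). lra.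
  - rewrite Bn_S. destruct (cross N eta k (Z.of_nat (S l)) (Z.of_nat w) Hk Ho ltac:(lia)) as [C _].
    specialize (IHl w ltac:(lia)).
    pose proof (mc N eta (Z.of_nat (S l))). pose proof (cL_nonneg N eta (Z.of_nat (S l))).
    set (g' := gL N eta k (Z.of_nat (S l))) in *. set (m' := mL N eta (Z.of_nat (S l))) in *.
    set (c' := cL N eta (Z.of_nat (S l))) in *. set (B := Bn N eta k l) in *.
    set (gw := gL N eta k (Z.of_nat w)) in *. set (mw := mL N eta (Z.of_nat w)) in *.
    apply (Rmult_le_reg_l (INR N)); auto.
    replace (INR N * (/ INR N * (g' + c' * B) * mw)) with (g' * mw + c' * (B * mw)) by (field; lra).
    assert (c' * (B * mw) <= c' * gw) by (apply Rmult_le_compat_l; auto).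
    assert (E : gw * m' + c' * gw = INR N * gw) by (rewrite <- H; ring). lra.
Qed.

Lemma Bn_step N eta k l : (1 <= N)%nat -> (k <= N)%nat ->
  (forall i j, (1 <= i)%nat -> (i <= j)%nat -> (j <= N)%nat -> (eta j <= eta i)%nat) ->
  Bn N eta k l <= Bn N eta k (S l).
Proof. intros HN Hk Ho. assert (HN' : 0 < INR N) by (apply lt_0_INR; lia).
  pose proof (Binv N eta k HN Hk Ho l (S l) ltac:(lia)). rewrite Bn_S. 
  pose proof (mc N eta (Z.of_nat (S l))).
  set (g' := gL N eta k (Z.of_nat (S l))) in *. set (m' := mL N eta (Z.of_nat (S l))) in *.
  set (c' := cL N eta (Z.of_nat (S l))) in *. 
  replace (/ INR N * (g' + c' * Bn N eta k l)) with (Bn N eta k l + / INR N * (g' - m' * Bn N eta k l))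
    by (replace c' with (INR N - m') by lra; field; lra).
  assert (0 <= / INR N * (g' - m' * Bn N eta k l)).
  { apply Rmult_le_pos. left; apply Rinv_0_lt_compat; auto. lra. } lra.
Qed.

Lemma Bn_mono N eta k l1 l2 : (1 <= N)%nat -> (k <= N)%nat ->
  (forall i j, (1 <= i)%nat -> (i <= j)%nat -> (j <= N)%nat -> (eta j <= eta i)%nat) ->
  (l1 <= l2)%nat -> Bn N eta k l1 <= Bn N eta k l2.
Proof. intros HN Hk Ho H. induction H; [lra|]. eapply Rle_trans; [apply IHle|]. apply Bn_step; auto. Qed.

Lemma Bn_le1 N eta k l : (1 <= N)%nat -> (k <= N)%nat ->
  (forall i j, (1 <= i)%nat -> (i <= j)%nat -> (j <= N)%nat -> (eta j <= eta i)%nat) ->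
  Bn N eta k l <= 1.
Proof. intros HN Hk Ho. assert (HN' : 0 < INR N) by (apply lt_0_INR; lia).
  induction l.
  - simpl. destruct (cross N eta k 0 0 Hk Ho ltac:(lia)) as [_ [_ C]].
    destruct (F1 N eta k 0 ltac:(lia)) as [_ [_ Hm0]]. rewrite Hm0 in C.
    apply (Rmult_le_reg_l (INR N)); auto. rewrite <- Rmult_assoc, Rinv_r by lra. lra.
  - rewrite Bn_S. destruct (cross N eta k (Z.of_nat (S l)) (Z.of_nat (S l)) Hk Ho ltac:(lia)) as [_ [_ C]].
    pose proof (mc N eta (Z.of_nat (S l))). pose proof (cL_nonneg N eta (Z.of_nat (S l))).
    apply (Rmult_le_reg_l (INR N)); auto. rewrite <- Rmult_assoc, Rinv_r by lra.
    assert (cL N eta (Z.of_nat (S l)) * Bn N eta k l <= cL N eta (Z.of_nat (S l)) * 1)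
      by (apply Rmult_le_compat_l; auto). lra.
Qed.

Definition hB N eta k (z : Z) : R := Bn N eta k (Z.to_nat (Z.min z (Z.of_nat (maxh N eta)))).

Lemma hB_mono N eta k z1 z2 : (1 <= N)%nat -> (k <= N)%nat ->
  (forall i j, (1 <= i)%nat -> (i <= j)%nat -> (j <= N)%nat -> (eta j <= eta i)%nat) ->
  (z1 <= z2)%Z -> hB N eta k z1 <= hB N eta k z2.
Proof. intros. unfold hB. apply Bn_mono; auto. lia. Qed.

Lemma avg_lb (D : list Z) f c : D <> [] -> (forall d, In d D -> c <= f d) -> c <= / INR (length D) * rsum D f.
Proof. intros HD H. assert (Hs : 0 < INR (length D)) by (apply lt_0_INR; destruct D; simpl; [congruence|lia]).
  assert (rsum D (fun _ => c) <= rsum D f) by (apply rsum_le_in; auto). rewrite rsum_const in H0.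
  apply (Rmult_le_reg_l (INR (length D))); auto. rewrite <- Rmult_assoc, Rinv_r by lra. lra. Qed.

Lemma cond_hB D N eta k : (1 <= N)%nat -> (k <= N)%nat ->
  (forall i j, (1 <= i)%nat -> (i <= j)%nat -> (j <= N)%nat -> (eta j <= eta i)%nat) ->
  D <> [] -> (forall d, In d D -> (-1 <= d)%Z) -> condh D N eta k (hB N eta k).
Proof.
  intros HN Hk Ho HD HDm z. assert (HN' : 0 < INR N) by (apply lt_0_INR; lia).
  rewrite split_sum.
  set (V := / INR (length D) * rsum D (fun d => hB N eta k (z + d))).
  assert (HV : hB N eta k (z - 1) <= V).
  { apply avg_lb; auto. intros d Hd. apply hB_mono; auto. specialize (HDm d Hd). lia. }
  pose proof (cL_nonneg N eta z).
  destruct (Z_le_gt_dec z 0) as [Hz|Hz].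
  - destruct (F1 N eta k z Hz) as [E1 [E2 _]]. rewrite E1, E2.
    unfold hB. replace (Z.to_nat (Z.min z (Z.of_nat (maxh N eta)))) with 0%nat by lia. change (Bn N eta k 0) with (/ INR N * gL N eta k 0). rewrite Rmult_0_l, Rplus_0_r. lra.
  - destruct (Z_le_gt_dec z (Z.of_nat (maxh N eta))) as [Hz2|Hz2].
    + unfold hB at 1. replace (Z.to_nat (Z.min z (Z.of_nat (maxh N eta)))) with (S (Z.to_nat (z - 1))) by lia.
      rewrite Bn_S. replace (Z.of_nat (S (Z.to_nat (z - 1)))) with z by lia.
      unfold hB in HV. replace (Z.to_nat (Z.min (z - 1) (Z.of_nat (maxh N eta)))) with (Z.to_nat (z - 1)) in HV by lia.
      apply Rmult_le_compat_l. left; apply Rinv_0_lt_compat; auto.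
      assert (cL N eta z * Bn N eta k (Z.to_nat (z - 1)) <= cL N eta z * V) by (apply Rmult_le_compat_l; auto). lra.
    + destruct (F2 N eta k z ltac:(lia)) as [E1 [E2 _]]. rewrite E1, E2.
      unfold hB in *. replace (Z.to_nat (Z.min z (Z.of_nat (maxh N eta)))) with (Z.to_nat (Z.of_nat (maxh N eta))) by lia.
      replace (Z.to_nat (Z.min (z - 1) (Z.of_nat (maxh N eta)))) with (Z.to_nat (Z.of_nat (maxh N eta))) in HV by lia.
      replace (/ INR N * (0 + INR N * V)) with V by (field; lra). lra.
Qed.


Definition SL N eta L := rsum (seq 0 (S L)) (fun l => mL N eta (Z.of_nat l)).
Definition GL N eta k L := rsum (seq 0 (S L)) (fun l => gL N eta k (Z.of_nat l)).

Lemma BT N eta k : (1 <= N)%nat -> (k <= N)%nat ->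
  (forall i j, (1 <= i)%nat -> (i <= j)%nat -> (j <= N)%nat -> (eta j <= eta i)%nat) ->
  forall L, GL N eta k L <= Bn N eta k L * SL N eta L /\ INR N <= SL N eta L.
Proof.
  intros HN Hk Ho. assert (HN' : 0 < INR N) by (apply lt_0_INR; lia).
  destruct (F1 N eta k 0 ltac:(lia)) as [_ [_ Hm0]].
  induction L.
  - unfold GL, SL. simpl seq. rewrite !rsum_cons, !rsum_nil. simpl Z.of_nat. rewrite Hm0.
    change (Bn N eta k 0) with (/ INR N * gL N eta k 0). split; [|lra]. right; field; lra.
  - destruct IHL as [IH1 IH2].
    unfold GL, SL in *. rewrite !(seq_S (S L)), !rsum_app, !rsum_cons, !rsum_nil. simpl (0 + S L)%nat.
    rewrite Bn_S.
    set (G := rsum (seq 0 (S L)) (fun l => gL N eta k (Z.of_nat l))) in *.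
    set (S0 := rsum (seq 0 (S L)) (fun l => mL N eta (Z.of_nat l))) in *.
    assert (Hcr : G * mL N eta (Z.of_nat (S L)) <= gL N eta k (Z.of_nat (S L)) * S0).
    { unfold G, S0. rewrite rsum_scal_r, <- rsum_scal.
      apply rsum_le_in. intros l Hl. apply in_seq in Hl.
      destruct (cross N eta k (Z.of_nat l) (Z.of_nat (S L)) Hk Ho ltac:(lia)) as [C _]. lra. }
    pose proof (mc N eta (Z.of_nat (S L))). pose proof (gm_bounds N eta k (Z.of_nat (S L))).
    set (g' := gL N eta k (Z.of_nat (S L))) in *. set (m' := mL N eta (Z.of_nat (S L))) in *.
    set (c' := cL N eta (Z.of_nat (S L))) in *. set (B := Bn N eta k L) in *.
    split; [|lra].
    assert (HS : 0 < S0) by lra.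
    assert (Key : S0 * (INR N * (/ INR N * (g' + c' * B) * (S0 + m')) - INR N * (G + g')) =
       (S0 + m' - INR N) * (g' * S0 - m' * G) + c' * (S0 + m') * (B * S0 - G)).
    { replace c' with (INR N - m') by lra. field. lra. }
    assert (P1 : 0 <= (S0 + m' - INR N) * (g' * S0 - m' * G)) by (apply Rmult_le_pos; lra).
    assert (P2 : 0 <= c' * (S0 + m') * (B * S0 - G)).
    { apply Rmult_le_pos; [apply Rmult_le_pos|]; try lra. unfold c'; apply cL_nonneg. }
    assert (0 <= INR N * (/ INR N * (g' + c' * B) * (S0 + m')) - INR N * (G + g')).
    { apply (Rmult_le_reg_l S0); auto. lra. }
    apply (Rmult_le_reg_l (INR N)); auto. lra.
Qed.

Lemma levcount n e : rsum (seq 0 n) (fun l => if (Z.of_nat l <=? Z.of_nat e)%Z then 1 else 0) = INR (Nat.min n (S e)).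
Proof. induction n; [reflexivity|]. rewrite seq_S, rsum_app, IHn, rsum_cons, rsum_nil. simpl (0 + n)%nat.
  destruct (Z.of_nat n <=? Z.of_nat e)%Z eqn:E.
  - apply Z.leb_le in E. replace (Nat.min (S n) (S e)) with (S (Nat.min n (S e))) by lia. rewrite S_INR; lra.
  - apply Z.leb_gt in E. replace (Nat.min (S n) (S e)) with (Nat.min n (S e)) by lia. lra.
Qed.

Lemma total_rsum (f : nat -> nat) l : INR (fold_right Nat.add 0%nat (map f l)) = rsum l (fun x => INR (f x)).
Proof. induction l; [reflexivity|]. simpl. rewrite plus_INR, IHl, rsum_cons. reflexivity. Qed.

Lemma SL_M N eta : SL N eta (maxh N eta) = INR (total N eta) + INR N.
Proof. unfold SL, mL. rewrite rsum_swap. unfold total. rewrite total_rsum.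
  replace (INR N) with (rsum (seq 1 N) (fun _ => 1)) by (rewrite rsum_const, length_seq; lra).
  rewrite <- rsum_plus.
  apply rsum_ext_in. intros x Hx. rewrite levcount. pose proof (eta_le_M N eta x Hx).
  replace (Nat.min (S (maxh N eta)) (S (eta x))) with (S (eta x)) by lia. rewrite S_INR. lra. Qed.

Lemma GL_M N eta k : (k <= N)%nat -> GL N eta k (maxh N eta) = rsum (seq 1 k) (fun i => INR (eta i) + 1).
Proof. intros Hk. unfold GL, gL. rewrite rsum_swap.
  rewrite (rsum_ext_in _ _ (fun x => indb (x <=? k)%nat * (INR (eta x) + 1))).
  2:{ intros x Hx. pose proof (eta_le_M N eta x Hx).
      replace (INR (eta x) + 1) with (rsum (seq 0 (S (maxh N eta))) (fun l => if (Z.of_nat l <=? Z.of_nat (eta x))%Z then 1 else 0)).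
      2:{ rewrite levcount. replace (Nat.min (S (maxh N eta)) (S (eta x))) with (S (eta x)) by lia. rewrite S_INR. lra. }
      rewrite <- rsum_scal. apply rsum_ext; intros l. destruct (_ <=? _)%Z; lra. }
  replace N with (k + (N - k))%nat by lia. rewrite seq_app, rsum_app.
  rewrite (rsum_ext_in (seq (1 + k) (N - k)) _ (fun _ => 0)).
  2:{ intros x Hx; apply in_seq in Hx. replace (x <=? k)%nat with false by (symmetry; apply Nat.leb_gt; lia). simpl; lra. }
  rewrite rsum_const, Rmult_0_r, Rplus_0_r. apply rsum_ext_in. intros x Hx; apply in_seq in Hx.
  replace (x <=? k)%nat with true by (symmetry; apply Nat.leb_le; lia). simpl; lra.
Qed.

Lemma final_ineq N eta k : (1 <= N)%nat -> (k <= N)%nat ->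
  (forall i j, (1 <= i)%nat -> (i <= j)%nat -> (j <= N)%nat -> (eta j <= eta i)%nat) ->
  rsum_1_to k (fun i => (INR (eta i) + 1) / (INR (total N eta) + INR N)) <= Bn N eta k (maxh N eta).
Proof.
  intros HN Hk Ho. destruct (BT N eta k HN Hk Ho (maxh N eta)) as [H1 H2].
  rewrite SL_M in H1, H2. rewrite GL_M in H1 by auto.
  unfold rsum_1_to. change (fold_right Rplus 0 (map ?f ?l)) with (rsum l f).
  unfold Rdiv. rewrite (rsum_ext _ _ (fun i => / (INR (total N eta) + INR N) * (INR (eta i) + 1))) by (intros; lra).
  rewrite rsum_scal. assert (0 < INR N) by (apply lt_0_INR; lia).
  apply (Rmult_le_reg_l (INR (total N eta) + INR N)); [lra|].
  rewrite <- Rmult_assoc, Rinv_r by lra. lra.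
Qed.


Lemma cv_const c : Un_cv (fun _ => c) c.
Proof. intros e He. exists 0%nat. intros. unfold R_dist. rewrite Rminus_diag, Rabs_R0; auto. Qed.

Lemma cv_shift1 u l : Un_cv u l -> Un_cv (fun n => u (S n)) l.
Proof. intros H e He. destruct (H e He) as [N HN]. exists N. intros n Hn. apply HN. lia. Qed.

Lemma cv_rsum {A} (l : list A) (u : A -> nat -> R) p :
  (forall i, In i l -> Un_cv (u i) (p i)) -> Un_cv (fun n => rsum l (fun i => u i n)) (rsum l p).
Proof. induction l; intros H.
  - exact (cv_const 0).
  - rewrite rsum_cons. apply (Un_cv_ext (fun n => u a n + rsum l (fun i => u i n))).
    { intros; rewrite rsum_cons; auto. }
    apply CV_plus. apply H; left; auto. apply IHl; intros; apply H; right; auto.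
Qed.

Lemma cv_bounds u l lo hi : Un_cv u l -> (forall n, lo <= u n <= hi) -> lo <= l <= hi.
Proof. intros H B. split.
  - apply (@Rle_cv_lim (fun _ => lo) u lo l); auto. intros; apply B. apply cv_const.
  - apply (@Rle_cv_lim u (fun _ => hi) l hi); auto. intros; apply B. apply cv_const.
Qed.

Lemma Ub0 N eta : (1 <= N)%nat -> forall n z, (z <= Z.of_nat n)%Z -> Up [(-1)%Z] N eta z n = 0.
Proof.
  intros HN n. induction n; intros z Hz.
  - simpl Up. rewrite (rsum_ext_in _ _ (fun _ => 0)). rewrite rsum_const; lra.
    intros x _. replace (z <=? _)%Z with true by (symmetry; apply Z.leb_le; lia). auto.
  - rewrite Up_S. rewrite (rsum_ext_in _ _ (fun _ => 0)). rewrite rsum_const; lra.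
    intros x _. destruct (z <=? _)%Z; auto. rewrite rsum_cons, rsum_nil, IHn by lia. lra.
Qed.

Lemma nat_arch r : exists n : nat, r < INR n.
Proof. destruct (archimed r) as [H _]. exists (Z.to_nat (up r)).
  destruct (Z_le_gt_dec (up r) 0).
  - apply IZR_le in l. pose proof (pos_INR (Z.to_nat (up r))). simpl in l. lra.
  - rewrite INR_IZR_INZ, Z2Nat.id by lia. auto. Qed.

Definition Dd : list Z := [1%Z; (-1)%Z].

Lemma Up_rec N eta z n : Up Dd N eta z (S n) =
  / INR N * (cL N eta z * (/ 2 * (Up Dd N eta (z + 1) n + Up Dd N eta (z - 1) n))).
Proof. rewrite Up_S, split_sum0. unfold Dd. rewrite !rsum_cons, rsum_nil. simpl length.
  replace (z + -1)%Z with (z - 1)%Z by lia. replace (INR 2) with 2 by (simpl; lra). f_equal. f_equal. f_equal. lra. Qed.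

Lemma recurrence N eta : (2 <= N)%nat ->
  (forall i j, (1 <= i)%nat -> (i <= j)%nat -> (j <= N)%nat -> (eta j <= eta i)%nat) ->
  Un_cv (fun n => Up Dd N eta (Z.of_nat (S (maxh N eta))) n) 0.
Proof.
  intros HN Ho. assert (HN1 : (1 <= N)%nat) by lia. assert (HD : Dd <> []) by discriminate.
  assert (HNr : 2 <= INR N) by (replace 2 with (INR 2) by (simpl; lra); apply le_INR; auto).
  assert (Hex : forall z, {l | Un_cv (fun n => Up Dd N eta z n) l}).
  { intros z. apply decreasing_cv.
    - intros n; apply Up_mono; auto.
    - exists 0. intros x [n ->]. unfold opp_seq. pose proof (Up_01 Dd N eta z n HN1 HD). lra. }
  set (Ul := fun z => proj1_sig (Hex z)).
  assert (HUl : forall z, Un_cv (fun n => Up Dd N eta z n) (Ul z)) by (intros; unfold Ul; destruct (Hex z); auto).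
  assert (HB : forall z, 0 <= Ul z <= 1).
  { intros z. apply (cv_bounds _ _ 0 1 (HUl z)). intros; apply Up_01; auto. }
  assert (HR : forall z, Ul z = / INR N * (cL N eta z * (/ 2 * (Ul (z + 1)%Z + Ul (z - 1)%Z)))).
  { intros z. apply (UL_sequence (fun n => Up Dd N eta z (S n))).
    - apply cv_shift1; auto.
    - apply (Un_cv_ext (fun n => / INR N * (cL N eta z * (/ 2 * (Up Dd N eta (z + 1) n + Up Dd N eta (z - 1) n))))).
      { intros; rewrite Up_rec; auto. }
      apply CV_mult; [apply cv_const|]. apply CV_mult; [apply cv_const|]. apply CV_mult; [apply cv_const|].
      apply CV_plus; auto. }
  set (M := Z.of_nat (maxh N eta)).
  assert (Harm : forall z, (M < z)%Z -> Ul z = / 2 * (Ul (z + 1)%Z + Ul (z - 1)%Z)).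
  { intros z Hz. rewrite HR at 1. destruct (F2 N eta 0 z Hz) as [_ [E _]]. rewrite E. field. lra. }
  set (d := Ul (M + 1)%Z - Ul M).
  assert (Hlin : forall j : nat, Ul (M + Z.of_nat j)%Z = Ul M + INR j * d /\
                               Ul (M + Z.of_nat j + 1)%Z = Ul M + (INR j + 1) * d).
  { induction j.
    - simpl. replace (M + 0)%Z with M by lia. unfold d. split; lra.
    - destruct IHj as [I1 I2]. split.
      + replace (M + Z.of_nat (S j))%Z with (M + Z.of_nat j + 1)%Z by lia. rewrite S_INR. lra.
      + pose proof (Harm (M + Z.of_nat j + 1)%Z ltac:(lia)).
        replace (M + Z.of_nat j + 1 - 1)%Z with (M + Z.of_nat j)%Z in H by lia.
        replace (M + Z.of_nat (S j) + 1)%Z with (M + Z.of_nat j + 1 + 1)%Z by lia. rewrite S_INR. lra. }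
  assert (Hd : d = 0).
  { destruct (Rtotal_order d 0) as [Hlt|[Heq|Hgt]]; auto; exfalso.
    - destruct (nat_arch (2 / (- d))) as [j Hj].
      assert (2 < INR j * (- d)).
      { replace 2 with (2 / (- d) * (- d)) by (field; lra). apply Rmult_lt_compat_r; lra. }
      destruct (Hlin j) as [L1 _]. pose proof (HB (M + Z.of_nat j)%Z). pose proof (HB M). nra.
    - destruct (nat_arch (2 / d)) as [j Hj].
      assert (2 < INR j * d).
      { replace 2 with (2 / d * d) by (field; lra). apply Rmult_lt_compat_r; lra. }
      destruct (Hlin j) as [L1 _]. pose proof (HB (M + Z.of_nat j)%Z). pose proof (HB M). nra. }
  set (c0 := Ul M).
  assert (Hc : forall z, (M <= z)%Z -> Ul z = c0).
  { intros z Hz. destruct (Hlin (Z.to_nat (z - M))) as [L1 _].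
    replace (M + Z.of_nat (Z.to_nat (z - M)))%Z with z in L1 by lia. rewrite L1, Hd. unfold c0; lra. }
  destruct (completeness (fun r => exists z, r = Ul z)) as [Sup [Hub Hlub]].
  { exists 1. intros r [z ->]. apply HB. }
  { exists (Ul 0%Z). exists 0%Z. auto. }
  assert (Hlow : forall z, (z <= M)%Z -> Ul z <= (INR N - 1) / INR N * Sup).
  { intros z Hz. rewrite HR. pose proof (F5 N eta z HN1 Ho Hz). pose proof (mc N eta z).
    pose proof (cL_nonneg N eta z).
    assert (U1 : Ul (z + 1)%Z <= Sup) by (apply Hub; eauto).
    assert (U2 : Ul (z - 1)%Z <= Sup) by (apply Hub; eauto).
    assert (A : / 2 * (Ul (z + 1)%Z + Ul (z - 1)%Z) <= Sup) by lra.
    assert (A0 : 0 <= / 2 * (Ul (z + 1)%Z + Ul (z - 1)%Z)) by (pose proof (HB (z+1)%Z); pose proof (HB (z-1)%Z); lra).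
    assert (cL N eta z <= INR N - 1) by lra.
    unfold Rdiv. rewrite (Rmult_comm (INR N - 1)), Rmult_assoc. apply Rmult_le_compat_l.
    left; apply Rinv_0_lt_compat; lra.
    apply Rmult_le_compat; lra. }
  assert (Hc0 : 0 <= c0) by (apply HB).
  assert (HS0 : 0 <= Sup) by (apply Rle_trans with c0; auto; apply Hub; exists M; auto).
  assert (HSup : Sup <= Rmax c0 ((INR N - 1) / INR N * Sup)).
  { apply Hlub. intros r [z ->]. destruct (Z_le_gt_dec z M).
    - eapply Rle_trans; [apply Hlow; auto| apply Rmax_r].
    - rewrite Hc by lia. apply Rmax_l. }
  assert (Hfrac : (INR N - 1) / INR N * Sup = Sup - Sup / INR N) by (field; lra).
  assert (HSN : 0 <= Sup / INR N) by (apply Rmult_le_pos; [lra| left; apply Rinv_0_lt_compat; lra]).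
  assert (Hc00 : c0 = 0).
  { assert (Hl : c0 <= (INR N - 1) / INR N * Sup) by (apply Hlow; lia).
    rewrite Hfrac in Hl, HSup. unfold Rmax in HSup. destruct (Rle_dec c0 (Sup - Sup / INR N)).
    - assert (Sup / INR N <= 0) by lra. assert (Sup = 0).
      { apply Rle_antisym; auto. apply (Rmult_le_reg_r (/ INR N)). apply Rinv_0_lt_compat; lra.
        rewrite Rmult_0_l. auto. }
      lra.
    - assert (Sup <= c0) by lra.
      assert (Sup / INR N <= c0 / INR N) by (apply Rmult_le_compat_r; [left; apply Rinv_0_lt_compat; lra| auto]).
      assert (c0 <= c0 - c0 / INR N) by lra.
      assert (c0 / INR N <= 0) by lra.
      apply Rle_antisym; auto. apply (Rmult_le_reg_r (/ INR N)). apply Rinv_0_lt_compat; lra.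
      rewrite Rmult_0_l. auto. }
  replace 0 with (Ul (Z.of_nat (S (maxh N eta)))). apply HUl.
  rewrite Hc by (unfold M; lia). auto.
Qed.


Lemma main_D D N eta k p : (1 <= N)%nat -> (k <= N)%nat ->
  (forall i j, (1 <= i)%nat -> (i <= j)%nat -> (j <= N)%nat -> (eta j <= eta i)%nat) ->
  D <> [] -> (forall d, In d D -> (-1 <= d)%Z) ->
  Un_cv (fun n => Up D N eta (Z.of_nat (S (maxh N eta))) n) 0 ->
  (forall i, Un_cv (fun n => Rp D N eta (Z.of_nat (S (maxh N eta))) n i) (p i)) ->
  Bn N eta k (maxh N eta) <= rsum (seq 1 k) p.
Proof.
  intros HN Hk Ho HD HDm HU Hp.
  assert (Hh : hB N eta k (Z.of_nat (S (maxh N eta))) = Bn N eta k (maxh N eta)).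
  { unfold hB. f_equal. lia. }
  rewrite <- Hh. rewrite <- (Rplus_0_r (rsum (seq 1 k) p)).
  apply (@Rle_cv_lim (fun _ => hB N eta k (Z.of_nat (S (maxh N eta))))
     (fun n => rsum (seq 1 k) (fun i => Rp D N eta (Z.of_nat (S (maxh N eta))) n i) + Up D N eta (Z.of_nat (S (maxh N eta))) n)).
  - intros n. apply key; auto. apply cond_hB; auto. intros z. unfold hB. apply Bn_le1; auto.
  - apply cv_const.
  - apply CV_plus; auto. apply (cv_rsum (seq 1 k) (fun i n => Rp D N eta _ n i)). intros; apply Hp.
Qed.

Theorem lemma3p7 (N : nat) (eta : nat -> nat)
  (hN : (2 <= N)%nat)
  (hord : forall i j : nat, (1 <= i)%nat -> (i <= j)%nat -> (j <= N)%nat ->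
            (eta j <= eta i)%nat) :
  exists pB pD : nat -> R,
    (forall i, (1 <= i <= N)%nat ->
       Un_cv (fun n => attach_prob_upto ballistic_steps N eta i n) (pB i)) /\
    (forall i, (1 <= i <= N)%nat ->
       Un_cv (fun n => attach_prob_upto diffusive_steps N eta i n) (pD i)) /\
    (forall k, (1 <= k <= N)%nat ->
       rsum_1_to k pB >=
         rsum_1_to k (fun i => (INR (eta i) + 1) / (INR (total N eta) + INR N)) /\
       rsum_1_to k pD >=
         rsum_1_to k (fun i => (INR (eta i) + 1) / (INR (total N eta) + INR N))).
Proof.
  assert (HN1 : (1 <= N)%nat) by lia.
  assert (Hex : forall D, D <> [] -> forall i,
     {l | Un_cv (fun n => Rp D N eta (Z.of_nat (S (maxh N eta))) n i) l}).
  { intros D HD i. apply growing_cv.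
    - intros n; apply Rp_mono; auto.
    - exists 1. intros x [n ->]. apply Rp_01; auto. }
  assert (HDb : ballistic_steps <> []) by discriminate.
  assert (HDd : diffusive_steps <> []) by discriminate.
  exists (fun i => proj1_sig (Hex ballistic_steps HDb i)), (fun i => proj1_sig (Hex diffusive_steps HDd i)).
  split; [|split].
  - intros i _. destruct (Hex ballistic_steps HDb i) as [l Hl]; simpl.
    apply (Un_cv_ext (fun n => Rp ballistic_steps N eta (Z.of_nat (S (maxh N eta))) n i)); auto.
    intros n; rewrite attach_Rp; auto.
  - intros i _. destruct (Hex diffusive_steps HDd i) as [l Hl]; simpl.
    apply (Un_cv_ext (fun n => Rp diffusive_steps N eta (Z.of_nat (S (maxh N eta))) n i)); auto.
    intros n; rewrite attach_Rp; auto.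
  - intros k Hk. pose proof (final_ineq N eta k HN1 ltac:(lia) hord) as F.
    split; apply Rle_ge; eapply Rle_trans; try apply F; unfold rsum_1_to;
      change (fold_right Rplus 0 (map ?f ?l)) with (rsum l f).
    + apply (main_D ballistic_steps); auto; try lia.
      * intros d Hd. simpl in Hd. destruct Hd as [<-|[]]. lia.
      * intros e He. exists (S (maxh N eta)). intros n Hn. rewrite Ub0; auto.
        unfold R_dist. rewrite Rminus_diag, Rabs_R0; auto. lia.
      * intros i. destruct (Hex ballistic_steps HDb i); auto.
    + apply (main_D diffusive_steps); auto; try lia.
      * intros d Hd. simpl in Hd. destruct Hd as [<-|[<-|[]]]; lia.
      * apply (recurrence N eta hN hord).
      * intros i. destruct (Hex diffusive_steps HDd i); auto.
Qed.
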